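(* Let $L\ge 1$, let $M_1,\dots,M_5\ge 2$, $N_1,\dots,N_4\ge 1$, and let $K_5\ge 2$ be an integer. For $l=1,\dots,L$ and $n=1,\dots,5$ let $\omega_{l,n}\in\mathbb{R}$, and put $\boldsymbol{\Phi}_n=\mathrm{Diag}(e^{\jmath\omega_{1,n}},\dots,e^{\jmath\omega_{L,n}})$. For $n=1,2,3,4$ assume the following: (i) $\boldsymbol{T}_n\in\mathbb{C}^{M_n\times N_n}$ satisfies $\boldsymbol{J}_{n,1}\boldsymbol{T}_n=\boldsymbol{J}_{n,2}\boldsymbol{T}_n\boldsymbol{F}_n$ for some non-singular $\boldsymbol{F}_n\in\mathbb{C}^{N_n\times N_n}$, where $\boldsymbol{J}_{n,1}=[\boldsymbol{I}_{M_n-1},\boldsymbol{0}_{(M_n-1)\times 1}]$ and $\boldsymbol{J}_{n,2}=[\boldsymbol{0}_{(M_n-1)\times 1},\boldsymbol{I}_{M_n-1}]$; (ii) writing $\boldsymbol{T}_n^{\mathrm{H}}=[\boldsymbol{t}_{n,1},\dots,\boldsymbol{t}_{n,M_n}]$ with $\boldsymbol{t}_{n,m}\in\mathbb{C}^{N_n}$, $\boldsymbol{Q}_n\in\mathbb{C}^{N_n\times N_n}$ is a matrix with $\boldsymbol{Q}_n\boldsymbol{t}_{n,M_n}=\boldsymbol{0}$ and $\boldsymbol{Q}_n\boldsymbol{F}_n^{\mathrm{H}}\boldsymbol{t}_{n,1}=\boldsymbol{0}$, and $\boldsymbol{L}_{n,1}=\boldsymbol{Q}_n$, $\boldsymbol{L}_{n,2}=\boldsymbol{Q}_n\boldsymbol{F}_n^{\mathrm{H}}$.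 Let $\boldsymbol{B}_n=\boldsymbol{T}_n^{\mathrm{H}}\boldsymbol{A}_n^{(M_n)}$ for $n=1,\dots,4$ and $\boldsymbol{P}=\boldsymbol{B}_1\odot\boldsymbol{B}_2\odot\boldsymbol{B}_3\odot\boldsymbol{B}_4\odot\boldsymbol{A}_5^{(K_5)}$. Define, for $i=1,2$, $\breve{\boldsymbol{J}}_{n,i}=\boldsymbol{I}_{N_1}\otimes\cdots\otimes\boldsymbol{L}_{n,i}\otimes\cdots\otimes\boldsymbol{I}_{N_4}\otimes\boldsymbol{I}_{K_5}$ for $n=1,2,3,4$ (with $\boldsymbol{L}_{n,i}$ in the $n$-th Kronecker factor and identities $\boldsymbol{I}_{N_k}$ in the other factors $k\neq n$, $k\le 4$), and $\breve{\boldsymbol{J}}_{5,i}=\boldsymbol{I}_{N_1}\otimes\boldsymbol{I}_{N_2}\otimes\boldsymbol{I}_{N_3}\otimes\boldsymbol{I}_{N_4}\otimes\bar{\boldsymbol{J}}_{5,i}$, where $\bar{\boldsymbol{J}}_{5,1}=[\boldsymbol{I}_{K_5-1},\boldsymbol{0}_{(K_5-1)\times1}]$ and $\bar{\boldsymbol{J}}_{5,2}=[\boldsymbol{0}_{(K_5-1)\times1},\boldsymbol{I}_{K_5-1}]$. Then for every $n=1,\dots,5$, $$\breve{\boldsymbol{J}}_{n,1}\boldsymbol{P}\boldsymbol{\Phi}_n=\breve{\boldsymbol{J}}_{n,2}\boldsymbol{P}.$$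
   Context: $\jmath$ is the imaginary unit. For $M\ge1$ and $\omega\in\mathbb{R}$, $\boldsymbol{a}^{(M)}(\omega)=[1,e^{\jmath\omega},\dots,e^{\jmath(M-1)\omega}]^{\mathrm{T}}$, and for any positive integer $K$, $\boldsymbol{A}_n^{(K)}=[\boldsymbol{a}^{(K)}(\omega_{1,n}),\dots,\boldsymbol{a}^{(K)}(\omega_{L,n})]\in\mathbb{C}^{K\times L}$. $\otimes$ is the Kronecker product and $\odot$ is the Khatri–Rao (column-wise Kronecker) product. $(\cdot)^{\mathrm{H}}$ is conjugate transpose. *)

(* Defs.v *)
From HB Require Import structures.
From mathcomp Require Import all_boot all_order all_algebra.
From mathcomp Require Import all_classical all_reals all_analysis.
From mathcomp Require Import complex mxtens.
Set Implicit Arguments. Unset Strict Implicit. Unset Printing Implicit Defensive.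
Import Order.TTheory GRing.Theory Num.Theory.
Local Open Scope ring_scope.
Local Open Scope complex_scope.

Definition expj {R : realType} (x : R) : R[i] := cos x +i* sin x.

Definition ctmx {R : realType} {m n : nat} (A : 'M[R[i]]_(m, n)) : 'M[R[i]]_(n, m) :=
  (map_mx (@conjc R) A)^T.

(* steering matrix A^{(K)} = [a^{(K)}(w_1), ..., a^{(K)}(w_L)],
   entries e^{j k w_l}, k = 0..K-1 *)
Definition steer {R : realType} (K L : nat) (w : 'I_L -> R) : 'M[R[i]]_(K, L) :=
  \matrix_(k < K, l < L) expj (k%:R * w l).

Definition Phimx {R : realType} (L : nat) (w : 'I_L -> R) : 'M[R[i]]_L :=
  diag_mx (\row_(l < L) expj (w l)).

Definition khatri_rao {T : pzRingType} {m p L : nat}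
  (A : 'M[T]_(m, L)) (B : 'M[T]_(p, L)) : 'M[T]_(m * p, L) :=
  \matrix_(i < m * p, l < L) (col l A *t col l B) i ord0.

Definition Jsel1 {T : pzRingType} (M : nat) : 'M[T]_(M.-1, M) :=
  \matrix_(i < M.-1, j < M) ((j : nat) == i)%:R.
Definition Jsel2 {T : pzRingType} (M : nat) : 'M[T]_(M.-1, M) :=
  \matrix_(i < M.-1, j < M) ((j : nat) == i.+1)%:R.

Definition mode_hyp {R : realType} (M N : nat)
  (T : 'M[R[i]]_(M, N)) (F Q : 'M[R[i]]_N) : Prop :=
  [/\ Jsel1 M *m T = Jsel2 M *m T *m F,
      F \in unitmx,
      (forall m : 'I_M, (m : nat) = M.-1 -> Q *m col m (ctmx T) = 0)
    & (forall m : 'I_M, (m : nat) = 0%N -> Q *m ctmx F *m col m (ctmx T) = 0)].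

(* Main.v *)
Require Import Defs.
From HB Require Import structures.
From mathcomp Require Import all_boot all_order all_algebra.
From mathcomp Require Import all_classical all_reals all_analysis.
From mathcomp Require Import complex mxtens.
From mathcomp Require Import ring.
Import Order.TTheory GRing.Theory Num.Theory.
Local Open Scope ring_scope.
Local Open Scope complex_scope.

Lemma expjD (R : realType) (x y : R) : expj (x + y) = expj x * expj y.
Proof. rewrite /expj cosD sinD /=; congr (_ +i* _); ring. Qed.

Lemma expjS (R : realType) (n : nat) (x : R) :
  expj (n.+1%:R * x) = expj x * expj (n%:R * x).
Proof. by rewrite -addn1 natrD mulrDl mul1r addrC expjD. Qed.

Lemma conjc_sum (R : realType) (I : Type) (r : seq I) (f : I -> R[i]) :
  conjc (\sum_(k <- r) f k) = \sum_(k <- r) conjc (f k).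
Proof. by rewrite rmorph_sum. Qed.

Lemma conjcM' (R : realType) (x y : R[i]) : conjc (x * y) = conjc x * conjc y.
Proof. by rewrite rmorphM. Qed.

Lemma sum_delta (T : pzRingType) M (k0 : 'I_M) (f : 'I_M -> T) :
  \sum_(k < M) ((k : nat) == k0)%:R * f k = f k0.
Proof.
rewrite (bigD1 k0) //= eqxx mul1r big1 ?addr0 // => k hk.
by rewrite (_ : ((k : nat) == k0) = false) ?mul0r //; exact: negbTE hk.
Qed.

Lemma eq_cols (T : Type) m n (A B : 'M[T]_(m, n)) :
  (forall l, col l A = col l B) -> A = B.
Proof. by move=> h; apply/matrixP=> i j; move/(_ j)/matrixP/(_ i ord0): h; rewrite !mxE. Qed.

Lemma col_mulE (T : pzRingType) m n p (A : 'M[T]_(m, n)) (B : 'M[T]_(n, p)) l :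
  col l (A *m B) = A *m col l B.
Proof. by apply/matrixP=> i j; rewrite !mxE; apply: eq_bigr => k _; rewrite !mxE. Qed.

Lemma col_mulsum (T : comPzRingType) m n p (A : 'M[T]_(m, n)) (B : 'M[T]_(n, p)) l :
  col l (A *m B) = \sum_(k < n) B k l *: col k A.
Proof.
apply/matrixP=> i j; rewrite !mxE summxE; apply: eq_bigr => k _.
by rewrite !mxE mulrC.
Qed.

Lemma col_kr (T : pzRingType) m p L (A : 'M[T]_(m, L)) (B : 'M[T]_(p, L)) l :
  col l (khatri_rao A B) = col l A *t col l B.
Proof. by apply/matrixP=> i j; rewrite [j]ord1 !mxE. Qed.

Lemma tens_scalel (R : realType) m n p q (a : R[i]) (A : 'M[R[i]]_(m, n)) (B : 'M[R[i]]_(p, q)) :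
  (a *: A) *t B = a *: (A *t B).
Proof. by apply/matrixP=> i j; rewrite !mxE mulrA. Qed.

Lemma tens_scaler (R : realType) m n p q (a : R[i]) (A : 'M[R[i]]_(m, n)) (B : 'M[R[i]]_(p, q)) :
  A *t (a *: B) = a *: (A *t B).
Proof. by apply/matrixP=> i j; rewrite !mxE mulrCA. Qed.

Lemma col_phi (R : realType) m L (X : 'M[R[i]]_(m, L)) (w : 'I_L -> R) l :
  col l (X *m Phimx w) = expj (w l) *: col l X.
Proof. by apply/matrixP=> i j; rewrite /Phimx mul_mx_diag !mxE mulrC. Qed.
Lemma tensmx_mulc (T : comPzRingType) m n p q
  (A : 'M[T]_(m,n)) (B : 'M[T]_(p,q)) (C : 'cV[T]_n) (D : 'cV[T]_q) :
  (A *t B) *m ((C *t D) : 'cV_(n * q)) = ((A *m C) *t (B *m D) : 'cV_(m * p)).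
Proof. exact: (@tensmx_mul T m n p q 1 1 A B C D). Qed.

Lemma Jsel1E (T : pzRingType) M N (A : 'M[T]_(M.+1, N)) (i : 'I_M) j :
  (Jsel1 M.+1 *m A) i j = A (widen_ord (leqnSn M) i) j.
Proof.
rewrite mxE -(@sum_delta _ _ (widen_ord (leqnSn M) i) (fun k => A k j)).
by apply: eq_bigr => k _; rewrite mxE.
Qed.

Lemma Jsel2E (T : pzRingType) M N (A : 'M[T]_(M.+1, N)) (i : 'I_M) j :
  (Jsel2 M.+1 *m A) i j = A (lift ord0 i) j.
Proof.
rewrite mxE -(@sum_delta _ _ (lift ord0 i) (fun k => A k j)).
by apply: eq_bigr => k _; rewrite mxE.
Qed.

Lemma shiftT (R : realType) M N (T : 'M[R[i]]_(M.+1, N)) (F : 'M[R[i]]_N) (i : 'I_M) :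
  Jsel1 M.+1 *m T = Jsel2 M.+1 *m T *m F ->
  ctmx F *m col (lift ord0 i) (ctmx T) = col (widen_ord (leqnSn M) i) (ctmx T).
Proof.
move=> hJ; apply/matrixP=> j z; rewrite [z]ord1.
move/matrixP/(_ i j): hJ; rewrite Jsel1E mxE => heq.
rewrite [RHS]mxE [RHS]mxE [RHS]mxE heq conjc_sum mxE; apply: eq_bigr => k _.
by rewrite Jsel2E !mxE conjcM' mulrC.
Qed.

Lemma mode_key (R : realType) M N (T : 'M[R[i]]_(M, N)) (F Q : 'M[R[i]]_N) L
  (w : 'I_L -> R) l :
  (2 <= M)%N -> mode_hyp T F Q ->
  expj (w l) *: (Q *m col l (ctmx T *m steer M w))
  = Q *m ctmx F *m col l (ctmx T *m steer M w).
Proof.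
case: M T => [|M0] // T _ [hJ _ hlast hfirst].
rewrite !col_mulsum -mulmxA !mulmx_sumr.
rewrite [RHS]big_ord_recl -scalemxAr -scalemxAr mulmxA hfirst // scaler0 add0r.
rewrite [in LHS]big_ord_recr /= -scalemxAr hlast // scaler0 addr0 scaler_sumr.
apply: eq_bigr => i _.
rewrite -!scalemxAr shiftT // scalerA !mxE.
have -> : (lift ord0 i : nat) = i.+1 by [].
by rewrite expjS.
Qed.

Lemma sel_key (R : realType) K L (w : 'I_L -> R) l :
  expj (w l) *: ((Jsel1 K : 'M[R[i]]_(K.-1, K)) *m col l (steer K w))
  = (Jsel2 K : 'M[R[i]]_(K.-1, K)) *m col l (steer K w).
Proof.
case: K => [|K]; first by apply/matrixP=> [[]].
apply/matrixP=> i j.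
rewrite [LHS]mxE Jsel1E Jsel2E !mxE.
have -> : (lift ord0 i : nat) = i.+1 by [].
by rewrite expjS.
Qed.

Local Close Scope complex_scope.
Theorem proposition2 (R : realType) (L M1 M2 M3 M4 M5 N1 N2 N3 N4 K5 : nat)
  (hL : (1 <= L)%N) (hM1 : (2 <= M1)%N) (hM2 : (2 <= M2)%N) (hM3 : (2 <= M3)%N)
  (hM4 : (2 <= M4)%N) (hM5 : (2 <= M5)%N)
  (hN1 : (1 <= N1)%N) (hN2 : (1 <= N2)%N) (hN3 : (1 <= N3)%N) (hN4 : (1 <= N4)%N)
  (hK5 : (2 <= K5)%N)
  (w1 w2 w3 w4 w5 : 'I_L -> R)
  (T1 : 'M[R[i]]_(M1, N1)) (T2 : 'M[R[i]]_(M2, N2))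
  (T3 : 'M[R[i]]_(M3, N3)) (T4 : 'M[R[i]]_(M4, N4))
  (F1 Q1 : 'M[R[i]]_N1) (F2 Q2 : 'M[R[i]]_N2)
  (F3 Q3 : 'M[R[i]]_N3) (F4 Q4 : 'M[R[i]]_N4)
  (H1 : mode_hyp T1 F1 Q1) (H2 : mode_hyp T2 F2 Q2)
  (H3 : mode_hyp T3 F3 Q3) (H4 : mode_hyp T4 F4 Q4) :
  let B1 := ctmx T1 *m steer M1 w1 in
  let B2 := ctmx T2 *m steer M2 w2 in
  let B3 := ctmx T3 *m steer M3 w3 in
  let B4 := ctmx T4 *m steer M4 w4 in
  let P : 'M[R[i]]_(N1 * N2 * N3 * N4 * K5, L) :=
    khatri_rao (khatri_rao (khatri_rao (khatri_rao B1 B2) B3) B4) (steer K5 w5) in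
  let I1 : 'M[R[i]]_N1 := 1%:M in
  let I2 : 'M[R[i]]_N2 := 1%:M in
  let I3 : 'M[R[i]]_N3 := 1%:M in
  let I4 : 'M[R[i]]_N4 := 1%:M in
  let I5 : 'M[R[i]]_K5 := 1%:M in
  let J11 := Q1 *t I2 *t I3 *t I4 *t I5 in
  let J12 := (Q1 *m ctmx F1) *t I2 *t I3 *t I4 *t I5 in
  let J21 := I1 *t Q2 *t I3 *t I4 *t I5 in
  let J22 := I1 *t (Q2 *m ctmx F2) *t I3 *t I4 *t I5 in
  let J31 := I1 *t I2 *t Q3 *t I4 *t I5 in
  let J32 := I1 *t I2 *t (Q3 *m ctmx F3) *t I4 *t I5 in
  let J41 := I1 *t I2 *t I3 *t Q4 *t I5 in
  let J42 := I1 *t I2 *t I3 *t (Q4 *m ctmx F4) *t I5 in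
  let J51 := I1 *t I2 *t I3 *t I4 *t (Jsel1 K5 : 'M[R[i]]_(K5.-1, K5)) in
  let J52 := I1 *t I2 *t I3 *t I4 *t (Jsel2 K5 : 'M[R[i]]_(K5.-1, K5)) in
  [/\ J11 *m P *m Phimx w1 = J12 *m P,
      J21 *m P *m Phimx w2 = J22 *m P,
      J31 *m P *m Phimx w3 = J32 *m P,
      J41 *m P *m Phimx w4 = J42 *m P
    & J51 *m P *m Phimx w5 = J52 *m P].

Proof.
cbv zeta.
have hc : forall l, col l (khatri_rao (khatri_rao (khatri_rao (khatri_rao
     (ctmx T1 *m steer M1 w1) (ctmx T2 *m steer M2 w2)) (ctmx T3 *m steer M3 w3))
     (ctmx T4 *m steer M4 w4)) (steer K5 w5)) =
  ((((col l (ctmx T1 *m steer M1 w1) *t col l (ctmx T2 *m steer M2 w2) : 'cV_(N1 * N2))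
  *t col l (ctmx T3 *m steer M3 w3) : 'cV_(N1 * N2 * N3)) *t col l (ctmx T4 *m steer M4 w4)
   : 'cV_(N1 * N2 * N3 * N4))
  *t col l (steer K5 w5) : 'cV_(N1 * N2 * N3 * N4 * K5)).
  by move=> l; rewrite !col_kr.
split; apply: eq_cols => l; rewrite col_phi !col_mulE hc !tensmx_mulc !mul1mx.
- by rewrite -(@mode_key _ _ _ _ _ _ _ w1 l hM1 H1) !(@tens_scalel R).
- by rewrite -(@mode_key _ _ _ _ _ _ _ w2 l hM2 H2) !(@tens_scaler R) ?(@tens_scalel R).
- by rewrite -(@mode_key _ _ _ _ _ _ _ w3 l hM3 H3) !(@tens_scaler R) ?(@tens_scalel R).
- by rewrite -(@mode_key _ _ _ _ _ _ _ w4 l hM4 H4) !(@tens_scaler R) ?(@tens_scalel R).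
- by rewrite -sel_key !(@tens_scaler R).
Qed.
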